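(* Let $X$ be a nonempty Polish space and, for $n\in\omega$, let $D_n,R_n$ be dense $G_\delta$ subsets of some open subsets of $X$ and $f_n:D_n\to R_n$ a continuous, open and onto map. Assume $\Delta(X)\subseteq\overline{A^f}\setminus A^f$, where $A^f=\bigcup_n\mathrm{Graph}(f_n)$. Then $(X,A^f)$ is a digraph of uncountable Borel chromatic number.
   Context: $\Delta(X)$ is the diagonal of $X$. A digraph on $X$ is a relation disjoint from $\Delta(X)$. The Borel chromatic number of a digraph $A$ on Polish $X$ is the least cardinality of a Polish $Y$ admitting a Borel $c:X\to Y$ with $c(x)\neq c(x')$ for $(x,x')\in A$; it is uncountable iff there is no Borel $c:X\to\omega$ with this property. *)

(* Defs.v *)
From Stdlib Require Import Reals.
Open Scope R_scope.

Section Metric.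
Context {X : Type} (d : X -> X -> R).

Definition is_metric : Prop :=
  (forall x y, 0 <= d x y) /\
  (forall x y, d x y = 0 <-> x = y) /\
  (forall x y, d x y = d y x) /\
  (forall x y z, d x z <= d x y + d y z).

Definition cauchy (s : nat -> X) : Prop :=
  forall eps, 0 < eps -> exists N, forall m n, (N <= m)%nat -> (N <= n)%nat ->
    d (s m) (s n) < eps.

Definition converges_to (s : nat -> X) (l : X) : Prop :=
  forall eps, 0 < eps -> exists N, forall n, (N <= n)%nat -> d (s n) l < eps.

Definition complete_metric : Prop :=
  forall s, cauchy s -> exists l, converges_to s l.

Definition separable_metric : Prop :=
  exists q : nat -> X, forall x eps, 0 < eps -> exists n, d x (q n) < eps.

Definition polish : Prop := is_metric /\ complete_metric /\ separable_metric.

Definition open_set (U : X -> Prop) : Prop :=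
  forall x, U x -> exists eps, 0 < eps /\ forall y, d x y < eps -> U y.

Definition in_closure (S : X -> Prop) (x : X) : Prop :=
  forall eps, 0 < eps -> exists y, S y /\ d x y < eps.

Definition G_delta (D : X -> Prop) : Prop :=
  exists U : nat -> X -> Prop, (forall n, open_set (U n)) /\
    forall x, D x <-> (forall n, U n x).

Definition dense_Gdelta_in_open (D : X -> Prop) : Prop :=
  exists O : X -> Prop, open_set O /\ (forall x, D x -> O x) /\
    (forall x, O x -> in_closure D x) /\ G_delta D.

Definition rel_open (S V : X -> Prop) : Prop :=
  exists U, open_set U /\ forall x, V x <-> (U x /\ S x).

Definition cont_open_onto (D R : X -> Prop) (f : X -> X) : Prop :=
  (forall x, D x -> R (f x)) /\
  (forall y, R y -> exists x, D x /\ f x = y) /\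
  (forall x, D x -> forall eps, 0 < eps -> exists delta, 0 < delta /\
     forall y, D y -> d x y < delta -> d (f x) (f y) < eps) /\
  (forall V, (forall x, V x -> D x) -> rel_open D V ->
     rel_open R (fun y => exists x, V x /\ f x = y)).

Definition in_closure2 (A : X -> X -> Prop) (x y : X) : Prop :=
  forall eps, 0 < eps -> exists a b, A a b /\ d x a < eps /\ d y b < eps.

Definition sigma_algebra (S : (X -> Prop) -> Prop) : Prop :=
  (forall A B, S A -> (forall x, A x <-> B x) -> S B) /\
  (forall A, S A -> S (fun x => ~ A x)) /\
  (forall A : nat -> X -> Prop, (forall n, S (A n)) -> S (fun x => exists n, A n x)).

Definition borel (B : X -> Prop) : Prop :=
  forall S, sigma_algebra S -> (forall U, open_set U -> S U) -> S B.

Definition borel_map_nat (c : X -> nat) : Prop :=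
  forall n, borel (fun x => c x = n).

Definition digraph (A : X -> X -> Prop) : Prop := forall x, ~ A x x.

Definition uncountable_borel_chromatic (A : X -> X -> Prop) : Prop :=
  ~ exists c : X -> nat, borel_map_nat c /\ forall x y, A x y -> c x <> c y.

End Metric.

Definition Af {X : Type} (D : nat -> X -> Prop) (f : nat -> X -> X) (x y : X) : Prop :=
  exists n, D n x /\ y = f n x.

(* Main.v *)
Require Import Defs.
From Stdlib Require Import Reals Lra Lia Classical ClassicalEpsilon Cantor.
Open Scope R_scope.

Definition dense_in {X} (d : X -> X -> R) (V G : X -> Prop) : Prop :=
  forall Q, Defs.open_set d Q -> (exists q, Q q) -> (forall q, Q q -> V q) ->
    exists y, Q y /\ G y.

Lemma ball_open {X} (d : X -> X -> R) : is_metric d ->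
  forall x r, Defs.open_set d (fun y => d x y < r).
Proof.
  intros [H0 [H1 [H2 H3]]] x r y Hy.
  exists (r - d x y); split; [lra|].
  intros z Hz. specialize (H3 x y z). lra.
Qed.

Lemma dxx {X} (d : X -> X -> R) : is_metric d -> forall x, d x x = 0.
Proof. intros [H0 [H1 _]] x. apply H1; reflexivity. Qed.

Definition binv {X} (d : X -> X -> R) (V : X -> Prop) (s : X * R) : Prop :=
  0 < snd s /\ forall y, d (fst s) y < snd s -> V y.

Definition bgood {X} (d : X -> X -> R) (H : nat -> X -> Prop) (n : nat) (s s' : X * R) : Prop :=
  0 < snd s' /\ snd s' < / (INR n + 1) /\
  forall y, d (fst s') y < 2 * snd s' -> d (fst s) y < snd s /\ H n y.

Lemma bstep {X} (d : X -> X -> R) (Hm : is_metric d) V H :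
  (forall n, Defs.open_set d (H n)) -> (forall n, dense_in d V (H n)) ->
  forall n s, exists s', binv d V s -> bgood d H n s s'.
Proof.
  intros Ho Hd n s.
  destruct (classic (binv d V s)) as [Hi|Hi]; [|exists s; tauto].
  destruct s as [x r]. destruct Hi as [Hr HV]; simpl in *.
  destruct (Hd n (fun y => d x y < r)) as [y [Hy1 Hy2]].
  - apply ball_open; auto.
  - exists x. rewrite (dxx d Hm). auto.
  - auto.
  - destruct (Ho n y Hy2) as [e [He1 He2]].
    assert (Hn : 0 < / (INR n + 1)).
    { apply Rinv_0_lt_compat. pose proof (pos_INR n). lra. }
    set (r' := Rmin (Rmin e (r - d x y)) (/ (INR n + 1)) / 3).
    assert (Hm1 : Rmin (Rmin e (r - d x y)) (/ (INR n + 1)) <= Rmin e (r - d x y)) by apply Rmin_l.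
    assert (Hm2 : Rmin (Rmin e (r - d x y)) (/ (INR n + 1)) <= / (INR n + 1)) by apply Rmin_r.
    assert (Hm3 : Rmin e (r - d x y) <= e) by apply Rmin_l.
    assert (Hm4 : Rmin e (r - d x y) <= r - d x y) by apply Rmin_r.
    assert (Hpos : 0 < Rmin (Rmin e (r - d x y)) (/ (INR n + 1))).
    { apply Rmin_glb_lt; [apply Rmin_glb_lt|]; lra. }
    exists (y, r'); intros _; unfold bgood; simpl; unfold r'.
    split; [lra|]. split; [lra|].
    intros w Hw. destruct Hm as [_ [_ [_ Ht]]]. specialize (Ht x y w). split.
    + lra.
    + apply He2. lra.
Qed.

Lemma baire_local {X} (d : X -> X -> R) (Hm : is_metric d) (Hc : complete_metric d)
  (V : X -> Prop) (H : nat -> X -> Prop) :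
  Defs.open_set d V -> (exists a, V a) -> (forall n, Defs.open_set d (H n)) ->
  (forall n, dense_in d V (H n)) -> exists z, V z /\ forall n, H n z.
Proof.
  intros HVo [a Ha] Ho Hd.
  destruct (HVo a Ha) as [r0 [Hr0 HB0]].
  set (stepf := fun n s => proj1_sig (constructive_indefinite_description _ (bstep d Hm V H Ho Hd n s))).
  assert (Hstep : forall n s, binv d V s -> bgood d H n s (stepf n s)).
  { intros n s. unfold stepf. destruct (constructive_indefinite_description _ _) as [s' Hs']. exact Hs'. }
  set (sq := fix sq n := match n with O => (a, r0) | S k => stepf k (sq k) end).
  assert (Hinv : forall n, binv d V (sq n)).
  { induction n.
    - split; simpl; auto.
    - simpl. destruct (Hstep n (sq n) IHn) as [Hp [_ Hg]]. split; auto.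
      intros y Hy. apply (proj2 IHn). apply (Hg y). lra. }
  assert (Hg : forall n, bgood d H n (sq n) (sq (S n))).
  { intros n. apply Hstep. apply Hinv. }
  assert (Hnest : forall j n y, d (fst (sq (n + j)%nat)) y < snd (sq (n + j)%nat) ->
                     d (fst (sq n)) y < snd (sq n)).
  { induction j; intros n y Hy.
    - rewrite Nat.add_0_r in Hy; auto.
    - apply IHj. rewrite Nat.add_succ_r in Hy.
      destruct (Hg (n + j)%nat) as [Hp [_ Hgg]]. apply (Hgg y). lra. }
  assert (Hself : forall k n, (n <= k)%nat -> d (fst (sq n)) (fst (sq k)) < snd (sq n)).
  { intros k n Hk. replace k with (n + (k - n))%nat by lia. apply (Hnest (k - n)%nat).
    rewrite (dxx d Hm). apply Hinv. }
  assert (Hcau : Defs.cauchy d (fun n => fst (sq n))).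
  { intros eps He. destruct (archimed_cor1 (eps / 2)) as [N [HN1 HN2]]; [lra|].
    exists (S N). intros m n Hm1 Hn1.
    pose proof (Hself m (S N) Hm1). pose proof (Hself n (S N) Hn1).
    destruct (Hg N) as [_ [Hr _]].
    assert (/ (INR N + 1) < / INR N).
    { apply Rinv_lt_contravar; [|lra]. apply Rmult_lt_0_compat; [apply lt_0_INR; lia|].
      pose proof (pos_INR N); lra. }
    pose proof Hm as [_ [_ [Hs Ht]]]. specialize (Ht (fst (sq m)) (fst (sq (S N))) (fst (sq n))).
    rewrite (Hs (fst (sq m)) (fst (sq (S N)))) in Ht. lra. }
  destruct (Hc _ Hcau) as [z Hz].
  assert (Hk : forall n, d (fst (sq (S n))) z < 2 * snd (sq (S n))).
  { intros n. destruct (Hinv (S n)) as [Hp _].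
    destruct (Hz _ Hp) as [N HN]. specialize (HN (max N (S n)) (Nat.le_max_l _ _)).
    pose proof (Hself (max N (S n)) (S n) (Nat.le_max_r _ _)).
    pose proof Hm as [_ [_ [Hs Ht]]]. specialize (Ht (fst (sq (S n))) (fst (sq (max N (S n)))) z).
    lra. }
  exists z. split.
  - destruct (Hg 0%nat) as [_ [_ Hgg]]. destruct (Hgg z (Hk 0%nat)) as [H1 _].
    apply (proj2 (Hinv 0%nat)). exact H1.
  - intros n. destruct (Hg n) as [_ [_ Hgg]]. apply (Hgg z (Hk n)).
Qed.

Definition odense {X} (d : X -> X -> R) (G : X -> Prop) : Prop :=
  Defs.open_set d G /\ forall x eps, 0 < eps -> exists y, G y /\ d x y < eps.

Lemma open_inter {X} (d : X -> X -> R) A B :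
  Defs.open_set d A -> Defs.open_set d B -> Defs.open_set d (fun z => A z /\ B z).
Proof.
  intros HA HB z [Az Bz]. destruct (HA z Az) as [e1 [He1 H1]]. destruct (HB z Bz) as [e2 [He2 H2]].
  exists (Rmin e1 e2). split; [apply Rmin_glb_lt; auto|].
  intros y Hy. pose proof (Rmin_l e1 e2). pose proof (Rmin_r e1 e2). split; [apply H1|apply H2]; lra.
Qed.

Lemma odense_inter {X} (d : X -> X -> R) (Hm : is_metric d) A B :
  odense d A -> odense d B -> odense d (fun z => A z /\ B z).
Proof.
  intros [HAo HAd] [HBo HBd]. split; [apply open_inter; auto|].
  intros x eps He. destruct (HAd x (eps/2)) as [y [Ay Hy]]; [lra|].
  destruct (HAo y Ay) as [e1 [He1 H1]].
  destruct (HBd y (Rmin e1 (eps/2))) as [w [Bw Hw]]; [apply Rmin_glb_lt; lra|].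
  pose proof (Rmin_l e1 (eps/2)). pose proof (Rmin_r e1 (eps/2)).
  exists w. split; [split; auto; apply H1; lra|].
  destruct Hm as [_ [_ [_ Ht]]]. specialize (Ht x y w). lra.
Qed.

Lemma odense_dense_in {X} (d : X -> X -> R) V G : odense d G -> dense_in d V G.
Proof.
  intros [Go Gd] Q Qo [q Hq] _. destruct (Qo q Hq) as [e [He H1]].
  destruct (Gd q e He) as [y [Gy Hy]]. exists y; auto.
Qed.

Lemma dense_in_inter {X} (d : X -> X -> R) V A B :
  Defs.open_set d A -> dense_in d V A -> dense_in d V B ->
  dense_in d V (fun z => A z /\ B z).
Proof.
  intros Ao HA HB Q Qo Qne QV. destruct (HA Q Qo Qne QV) as [y [Qy Ay]].
  destruct (HB (fun z => Q z /\ A z)) as [w [[Qw Aw] Bw]].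
  - apply open_inter; auto.
  - exists y; auto.
  - intros q [Hq _]; auto.
  - exists w; auto.
Qed.

Definition BP {X} (d : X -> X -> R) (S : X -> Prop) : Prop :=
  exists (U : X -> Prop) (G : nat -> X -> Prop), Defs.open_set d U /\ (forall m, odense d (G m)) /\
    forall z, (forall m, G m z) -> (S z <-> U z).

Lemma odense_true {X} (d : X -> X -> R) (Hm : is_metric d) : odense d (fun _ => True).
Proof.
  split.
  - intros x _. exists 1. split; [lra|auto].
  - intros x eps He. exists x. rewrite (dxx d Hm). auto.
Qed.

Lemma BP_sigma {X} (d : X -> X -> R) (Hm : is_metric d) : sigma_algebra (BP d).
Proof.
  split; [|split].
  - intros A B [U [G [Uo [Gd HU]]]] HAB. exists U, G. split; [auto|split; [auto|]].
    intros z Hz. rewrite <- HAB. apply HU; auto.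
  - intros A [U [G [Uo [Gd HU]]]].
    set (U' := fun z => exists e, 0 < e /\ forall y, d z y < e -> ~ U y).
    assert (U'o : Defs.open_set d U').
    { intros z [e [He H1]]. exists (e - d z z). rewrite (dxx d Hm). split; [lra|].
      intros y Hy. exists (e - d z y). split; [lra|].
      intros w Hw. apply H1. destruct Hm as [_ [_ [_ Ht]]]. specialize (Ht z y w). lra. }
    assert (UU'd : odense d (fun z => U z \/ U' z)).
    { split.
      - intros z [Uz|U'z].
        + destruct (Uo z Uz) as [e [He H1]]. exists e. split; auto.
        + destruct (U'o z U'z) as [e [He H1]]. exists e. split; auto.
      - intros x eps He. destruct (classic (exists y, U y /\ d x y < eps)) as [[y [Uy Hy]]|Hn].
        + exists y. auto.
        + exists x. rewrite (dxx d Hm). split; [|auto]. right. exists eps. split; auto.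
          intros y Hy Uy. apply Hn. exists y. auto. }
    exists U', (fun m z => G m z /\ (U z \/ U' z)). split; [auto|split].
    + intros m. apply odense_inter; auto.
    + intros z Hz. assert (HG : forall m, G m z) by (intros m; apply Hz).
      assert (HUU : U z \/ U' z) by apply (Hz 0%nat).
      specialize (HU z HG). split.
      * intros nA. destruct HUU as [Uz|U'z]; auto. exfalso. apply nA. apply HU. auto.
      * intros [e [He H1]] Az. apply (H1 z). rewrite (dxx d Hm); auto. apply HU; auto.
  - intros A HA.
    assert (HF : forall n, { p : (X -> Prop) * (nat -> X -> Prop) |
        Defs.open_set d (fst p) /\ (forall m, odense d (snd p m)) /\
        forall z, (forall m, snd p m z) -> (A n z <-> fst p z) }).
    { intros n. apply constructive_indefinite_description.
      destruct (HA n) as [U [G HH]]. exists (U, G). exact HH. }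
    exists (fun z => exists n, fst (proj1_sig (HF n)) z).
    exists (fun k => snd (proj1_sig (HF (fst (of_nat k)))) (snd (of_nat k))).
    split; [|split].
    + intros z [n Hn]. destruct (proj2_sig (HF n)) as [Uo _].
      destruct (Uo z Hn) as [e [He H1]]. exists e. split; auto. intros y Hy. exists n. auto.
    + intros k. apply (proj2_sig (HF (fst (of_nat k)))).
    + intros z Hz. assert (Hall : forall n m, snd (proj1_sig (HF n)) m z).
      { intros n m. specialize (Hz (to_nat (n, m))). rewrite cancel_of_to in Hz. exact Hz. }
      split.
      * intros [n An]. exists n. apply (proj2_sig (HF n)); auto.
      * intros [n Un]. exists n. apply (proj2_sig (HF n)); auto.
Qed.

Lemma borel_BP {X} (d : X -> X -> R) (Hm : is_metric d) S : Defs.borel d S -> BP d S.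
Proof.
  intros HS. apply HS; [apply BP_sigma; auto|].
  intros U Uo. exists U, (fun _ _ => True). split; [auto|split].
  - intros m. apply odense_true; auto.
  - intros z _. tauto.
Qed.

Lemma preim_dense {X} (d : X -> X -> R) (Hm : is_metric d) (D Rr O O' V G : X -> Prop) (f : X -> X) :
  cont_open_onto d D Rr f ->
  Defs.open_set d O -> (forall x, O x -> Defs.in_closure d D x) ->
  Defs.open_set d O' -> (forall x, Rr x -> O' x) -> (forall x, O' x -> Defs.in_closure d Rr x) ->
  (forall x, V x -> O x) -> odense d G ->
  exists E, Defs.open_set d E /\ dense_in d V E /\ forall z, D z -> E z -> G (f z).
Proof.
  intros [Hmap [Honto [Hcont Hopen]]] Oo Ocl O'o RO' O'cl VO [Go Gd].
  pose proof Hm as [_ [_ [Hs Ht]]].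
  exists (fun z => exists y e de, D y /\ 0 < e /\ (forall w, d (f y) w < e -> G w) /\ 0 < de /\
            (forall w, D w -> d y w < de -> d (f y) (f w) < e) /\ d y z < de).
  split; [|split].
  - intros z [y [e [de [Dy [He [HG [Hde [Hc Hz]]]]]]]].
    exists (de - d y z). split; [lra|]. intros w Hw.
    exists y, e, de. repeat split; auto. specialize (Ht y z w). lra.
  - intros Q Qo [q Qq] QV.
    destruct (Qo q Qq) as [eq [Heq Hq]].
    destruct (Ocl q (VO q (QV q Qq)) eq Heq) as [y0 [Dy0 Hy0]].
    destruct (Hopen (fun x => Q x /\ D x)) as [T [To HT]].
    + intros x [_ Dx]; auto.
    + exists Q. split; auto. tauto.
    + assert (Tt : T (f y0) /\ Rr (f y0)).
      { apply HT. exists y0. split; auto. }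
      destruct Tt as [Tt Rt].
      destruct (To _ Tt) as [eT [HeT HTb]].
      destruct (O'o _ (RO' _ Rt)) as [eO [HeO HOb]].
      set (rho := Rmin eT eO).
      assert (Hrho : 0 < rho) by (apply Rmin_glb_lt; auto).
      assert (rho <= eT) by apply Rmin_l. assert (rho <= eO) by apply Rmin_r.
      destruct (Gd (f y0) (rho/2)) as [s [Gs Hs1]]; [lra|].
      destruct (Go s Gs) as [eG [HeG HGb]].
      assert (Os : O' s) by (apply HOb; lra).
      destruct (O'cl s Os (Rmin eG (rho/2))) as [r [Rr_r Hr]]; [apply Rmin_glb_lt; lra|].
      pose proof (Rmin_l eG (rho/2)). pose proof (Rmin_r eG (rho/2)).
      assert (Tr : T r) by (apply HTb; specialize (Ht (f y0) s r); lra).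
      assert (Gr : G r) by (apply HGb; lra).
      destruct (proj2 (HT r) (conj Tr Rr_r)) as [x [[Qx Dx] Hfx]].
      exists x. split; auto.
      subst r. destruct (Go _ Gr) as [e' [He' HGe]].
      destruct (Hcont x Dx e' He') as [de [Hde Hcx]].
      exists x, e', de. repeat split; auto. rewrite (dxx d Hm). auto.
  - intros z Dz [y [e [de [Dy [He [HG [Hde [Hc Hz]]]]]]]]. apply HG. apply Hc; auto.
Qed.

Theorem lemma2p1 (X : Type) (d : X -> X -> R)
  (D Rn : nat -> X -> Prop) (f : nat -> X -> X) :
  polish d ->
  (exists x : X, True) ->
  (forall n, dense_Gdelta_in_open d (D n)) ->
  (forall n, dense_Gdelta_in_open d (Rn n)) ->
  (forall n, cont_open_onto d (D n) (Rn n) (f n)) ->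
  (forall x, in_closure2 d (Af D f) x x /\ ~ Af D f x x) ->
  digraph (Af D f) /\ uncountable_borel_chromatic d (Af D f).
Proof.
  intros [Hm [Hc _]] [x0 _] HD HR Hf Hdiag.
  split; [intros x; apply Hdiag|].
  intros [c [Hcb Hcol]].
  assert (HF : forall n, { p : (X -> Prop) * (nat -> X -> Prop) |
        Defs.open_set d (fst p) /\ (forall m, odense d (snd p m)) /\
        forall z, (forall m, snd p m z) -> (c z = n <-> fst p z) }).
  { intros n. apply constructive_indefinite_description.
    destruct (borel_BP d Hm _ (Hcb n)) as [U [G HH]]. exists (U, G). exact HH. }
  assert (Hex : exists n a, fst (proj1_sig (HF n)) a).
  { apply NNPP. intros Hn.
    destruct (baire_local d Hm Hc (fun _ => True)
       (fun k => snd (proj1_sig (HF (fst (of_nat k)))) (snd (of_nat k)))) as [z [_ Hz]].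
    - intros x _. exists 1. split; [lra|auto].
    - exists x0; auto.
    - intros k. apply (proj2_sig (HF (fst (of_nat k)))).
    - intros k. apply odense_dense_in. apply (proj2_sig (HF (fst (of_nat k)))).
    - apply Hn. exists (c z), z. apply (proj2_sig (HF (c z))); auto.
      intros m. specialize (Hz (to_nat (c z, m))). rewrite cancel_of_to in Hz. exact Hz. }
  destruct Hex as [n [a Ha]].
  destruct (proj2_sig (HF n)) as [Uo [Gd HB]].
  set (U := fst (proj1_sig (HF n))) in *.
  set (G := snd (proj1_sig (HF n))) in *.
  clearbody U G.
  pose proof Hm as [_ [_ [Hs Ht]]].
  destruct (Uo a Ha) as [e0 [He0 HU0]].
  destruct (proj1 (Hdiag a) e0 He0) as [p [b [[k [Dp Hb]] [Hp Hbb]]]].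
  subst b.
  assert (Up : U p) by auto. assert (Ufp : U (f k p)) by auto.
  destruct (Uo _ Ufp) as [e1 [He1 HU1]].
  destruct (Hf k) as [Hmap [Honto [Hcont Hopen]]].
  destruct (Hcont p Dp e1 He1) as [de [Hde Hcp]].
  destruct (HD k) as [O [Oo [DO [Ocl [Ud [Udo HUd]]]]]].
  destruct (HR k) as [O' [O'o [RO' [O'cl _]]]].
  destruct (Oo p (DO p Dp)) as [e2 [He2 HO2]].
  destruct (Uo p Up) as [e3 [He3 HU3]].
  set (rad := Rmin de (Rmin e2 e3)).
  assert (Hrad : 0 < rad) by (apply Rmin_glb_lt; auto; apply Rmin_glb_lt; auto).
  assert (rad <= de) by apply Rmin_l.
  assert (rad <= e2) by (pose proof (Rmin_r de (Rmin e2 e3)); pose proof (Rmin_l e2 e3); unfold rad; lra).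
  assert (rad <= e3) by (pose proof (Rmin_r de (Rmin e2 e3)); pose proof (Rmin_r e2 e3); unfold rad; lra).
  set (V := fun z => d p z < rad).
  assert (VO : forall z, V z -> O z) by (intros z Hz; apply HO2; unfold V in Hz; lra).
  assert (HE : forall m, { E : X -> Prop | Defs.open_set d E /\ dense_in d V E /\
                 forall z, D k z -> E z -> G m (f k z) }).
  { intros m. apply constructive_indefinite_description.
    apply (preim_dense d Hm (D k) (Rn k) O O' V (G m) (f k)); auto. }
  destruct (baire_local d Hm Hc V
     (fun j z => Ud j z /\ (G j z /\ proj1_sig (HE j) z)) ) as [z [Vz Hz]].
  - apply ball_open; auto.
  - exists p. unfold V. rewrite (dxx d Hm). auto.
  - intros j. apply open_inter; [apply Udo|]. apply open_inter; [apply Gd|apply (proj2_sig (HE j))].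
  - intros j. apply dense_in_inter; [apply Udo| |].
    + intros Q Qo [q Qq] QV. destruct (Qo q Qq) as [eq [Heq Hq]].
      destruct (Ocl q (VO q (QV q Qq)) eq Heq) as [y [Dy Hy]].
      exists y. split; auto. apply HUd; auto.
    + apply dense_in_inter; [apply Gd| apply odense_dense_in; apply Gd|apply (proj2_sig (HE j))].
  - assert (Dz : D k z) by (apply HUd; intros j; apply Hz).
    unfold V in Vz.
    assert (Hcz : c z = n) by (apply HB; [intros j; apply Hz| apply HU3; lra]).
    assert (Hcfz : c (f k z) = n).
    { apply HB.
      - intros j. apply (proj2_sig (HE j)); auto. apply Hz.
      - apply HU1. apply Hcp; auto; lra. }
    apply (Hcol z (f k z)); [exists k; auto| congruence].
Qed.
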